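(* Let $G$ be a reaction network whose stoichiometric subspace is one-dimensional, and suppose $cap_{pos}(G)<+\infty$. Then there exist a rate-constant vector $\kappa$ and a total-constant vector $c$ such that $G$ has $cap_{pos}(G)$ positive steady states in the stoichiometric compatibility class $\mathcal P_c$, of which $cap_{stab}(G)$ are stable.
   Context: A reaction network $G$ has species $X_1,\dots,X_s$ and $m$ reactions $\sum_{i}\alpha_{ij}X_i\to\sum_i\beta_{ij}X_i$ ($j=1,\dots,m$), with $\alpha_{ij},\beta_{ij}\in\mathbb Z_{\ge0}$ and $(\alpha_{1j},\dots,\alpha_{sj})\neq(\beta_{1j},\dots,\beta_{sj})$. The stoichiometric matrix $\mathcal N$ has entries $\beta_{ij}-\alpha_{ij}$; its image $S$ is the stoichiometric subspace. For $\kappa\in\mathbb R^m_{>0}$, mass-action kinetics gives $\dot x=f(\kappa;x)=\mathcal N(\kappa_1\prod_i x_i^{\alpha_{i1}},\dots,\kappa_m\prod_i x_i^{\alpha_{im}})^\top$. When $S$ is one-dimensional, species are labelled so that $\beta_{11}-\alpha_{11}\ne0$, and for $c\in\mathbb R^{s-1}$ the stoichiometric compatibility class is $\mathcal P_c=\{x\in\mathbb R^s_{\ge0}:(\beta_{i1}-\alpha_{i1})x_1-(\beta_{11}-\alpha_{11})x_i=c_{i-1},\ i=2,\dots,s\}$. A steady state is $x\in\mathbb R^s_{\ge0}$ with $f(\kappa;x)=0$; positive if $x\in\mathbb R^s_{>0}$; nondegenerate if $\mathrm{Jac}_f(x)(S)=S$; stable if nondegenerate and all nonzero eigenvalues of $\mathrm{Jac}_f(x)$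 have negative real parts. $G$ admits $N$ (resp. stable) positive steady states if for some $\kappa$ and $c$ it has $N$ such positive steady states in $\mathcal P_c$; $cap_{pos}(G)$ and $cap_{stab}(G)$ are the maxima of such $N$ in $\mathbb Z_{\ge0}\cup\{+\infty\}$. *)

(* Defs.v *)
From HB Require Import structures.
From mathcomp Require Import all_boot all_order all_algebra.
From mathcomp Require Import reals.
From mathcomp.real_closed Require Import complex.
Set Implicit Arguments. Unset Strict Implicit. Unset Printing Implicit Defensive.
Import Order.TTheory GRing.Theory Num.Theory.
Local Open Scope ring_scope.

(* A reaction network with n species X_0..X_{n-1} and m reactions is given by
   the reactant / product complexes alpha, beta : 'M[nat]_(n, m) (column j is
   the reaction j).  Index 0 plays the role of the paper's index 1. *)
Definition is_network (n m : nat) (alpha beta : 'M[nat]_(n, m)) : Prop :=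
  forall j : 'I_m, exists i : 'I_n, alpha i j <> beta i j.

Section MassAction.
Variables (R : realType) (n m : nat) (alpha beta : 'M[nat]_(n, m)).

Definition stoich : 'M[R]_(n, m) :=
  \matrix_(i, j) ((beta i j)%:R - (alpha i j)%:R).

(* the stoichiometric subspace S = Im N, as a row space (rows of N^T) *)
Definition stoich_dim : nat := \rank (stoich^T).

Definition monom (j : 'I_m) (x : 'cV[R]_n) : R :=
  \prod_(i < n) x i 0 ^+ alpha i j.

Definition dmonom (j : 'I_m) (k : 'I_n) (x : 'cV[R]_n) : R :=
  (alpha k j)%:R * x k 0 ^+ (alpha k j).-1 *
  \prod_(i < n | i != k) x i 0 ^+ alpha i j.

Definition mass_action (kappa : 'cV[R]_m) (x : 'cV[R]_n) : 'cV[R]_n :=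
  stoich *m \col_j (kappa j 0 * monom j x).

Definition jac (kappa : 'cV[R]_m) (x : 'cV[R]_n) : 'M[R]_n :=
  \matrix_(i, k) \sum_(j < m) stoich i j * kappa j 0 * dmonom j k x.

Definition pos_vec (p : nat) (v : 'cV[R]_p) : Prop := forall i, 0 < v i 0.
Definition nonneg_vec (p : nat) (v : 'cV[R]_p) : Prop := forall i, 0 <= v i 0.

Definition steady_state (kappa : 'cV[R]_m) (x : 'cV[R]_n) : Prop :=
  nonneg_vec x /\ mass_action kappa x = 0.

Definition pos_steady_state (kappa : 'cV[R]_m) (x : 'cV[R]_n) : Prop :=
  steady_state kappa x /\ pos_vec x.

(* nondegenerate: Jac_f(x)(S) = S.  With S the row space of N^T, the image
   J(S) is the row space of N^T J^T. *)
Definition nondegenerate (kappa : 'cV[R]_m) (x : 'cV[R]_n) : bool :=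
  (stoich^T *m (jac kappa x)^T == stoich^T)%MS.

Definition stable (kappa : 'cV[R]_m) (x : 'cV[R]_n) : Prop :=
  nondegenerate kappa x /\
  forall lam : R[i],
    eigenvalue (map_mx (fun r : R => (r%:C)%C) (jac kappa x)) lam ->
    lam != 0 -> complex.Re lam < 0.

Definition has_card (T : eqType) (P : T -> Prop) (k : nat) : Prop :=
  exists s : seq T, [/\ uniq s, forall x, P x <-> x \in s & size s = k].

End MassAction.

Section OneDim.
Variables (R : realType) (s m : nat) (alpha beta : 'M[nat]_(s.+1, m.+1)).
(* One-dimensional case; species/reactions labelled so that
   beta_{11} - alpha_{11} <> 0 (here: index ord0).  For c in R^{s}
   (the paper's R^{s-1} with s+1 species here), the stoichiometric
   compatibility class P_c: *)
Definition compat_class (c : 'cV[R]_s) (x : 'cV[R]_s.+1) : Prop :=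
  nonneg_vec x /\
  forall i : 'I_s,
    stoich R alpha beta (lift ord0 i) ord0 * x ord0 0
    - stoich R alpha beta ord0 ord0 * x (lift ord0 i) 0 = c i 0.

Definition pos_ss_in (kappa : 'cV[R]_m.+1) (c : 'cV[R]_s) (x : 'cV[R]_s.+1)
  : Prop := pos_steady_state alpha beta kappa x /\ compat_class c x.

Definition stab_pos_ss_in (kappa : 'cV[R]_m.+1) (c : 'cV[R]_s)
  (x : 'cV[R]_s.+1) : Prop :=
  pos_ss_in kappa c x /\ stable alpha beta kappa x.

Definition admits (P : 'cV[R]_m.+1 -> 'cV[R]_s -> 'cV[R]_s.+1 -> Prop)
  (k : nat) : Prop :=
  exists kappa c, pos_vec kappa /\ has_card (P kappa c) k.

Definition admits_inf (P : 'cV[R]_m.+1 -> 'cV[R]_s -> 'cV[R]_s.+1 -> Prop)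
  : Prop :=
  exists kappa c, pos_vec kappa /\ ~ (exists k, has_card (P kappa c) k).

Definition capacity_is (P : 'cV[R]_m.+1 -> 'cV[R]_s -> 'cV[R]_s.+1 -> Prop)
  (N : nat) : Prop :=
  ~ admits_inf P /\ admits P N /\ forall k, admits P k -> (k <= N)%N.

Definition cap_pos_is (N : nat) : Prop := capacity_is pos_ss_in N.
Definition cap_stab_is (N : nat) : Prop := capacity_is stab_pos_ss_in N.

End OneDim.

(* Main.v *)
Require Import Defs.
From HB Require Import structures.
From mathcomp Require Import all_boot all_order all_algebra.
From mathcomp Require Import reals.
From mathcomp.real_closed Require Import complex polyrcf.
From mathcomp Require Import ring lra zify.
From Stdlib Require Import Classical.
Set Implicit Arguments. Unset Strict Implicit. Unset Printing Implicit Defensive.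
Import Order.TTheory GRing.Theory Num.Theory.
Local Open Scope ring_scope.

Section Glue.
Variables (R : realType) (s m : nat) (alpha beta : 'M[nat]_(s.+1, m.+1)).
Hypothesis Hdim : stoich_dim R alpha beta = 1%N.
Hypothesis Hlab : stoich R alpha beta ord0 ord0 != 0.

Local Notation N := (stoich R alpha beta).
Definition vv (i : 'I_s.+1) : R := N i ord0.
Definition lam (j : 'I_m.+1) : R := N ord0 j / N ord0 ord0.

Lemma N_rank1 i j : N i j = lam j * vv i.
Proof.
pose NT := N^T.
have r0nz : row ord0 NT != 0.
  apply/eqP => /matrixP /(_ ord0 ord0); rewrite !mxE => H.
  by move: Hlab; rewrite mxE H eqxx.
have rk : \rank NT = 1%N by rewrite -Hdim.
have sub0 : (NT <= row ord0 NT)%MS.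
  have := mxrank_leqif_sup (row_sub ord0 NT).
  by rewrite rank_rV r0nz rk => -[_ <-].
have := submx_trans (row_sub j NT) sub0.
move=> /sub_rVP [a Ha].
have Hi : forall i, N i j = a * N i ord0.
  by move=> i'; move/matrixP: Ha => /(_ ord0 i'); rewrite !mxE.
rewrite /lam /vv Hi (Hi ord0) mulfK //.
Qed.

Lemma vv0 : vv ord0 != 0. Proof. exact: Hlab. Qed.

Definition gg (kappa : 'cV[R]_m.+1) (x : 'cV[R]_s.+1) : R :=
  \sum_j lam j * kappa j 0 * Defs.monom alpha j x.

Lemma mass_actionE kappa x i : mass_action alpha beta kappa x i 0 = vv i * gg kappa x.
Proof.
rewrite /mass_action mxE /gg mulr_sumr; apply: eq_bigr => j _.
by rewrite N_rank1 mxE; ring.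
Qed.

Lemma mass_action0 kappa x : (mass_action alpha beta kappa x = 0) <-> gg kappa x = 0.
Proof.
split.
  move/matrixP => /(_ ord0 ord0); rewrite mass_actionE mxE => /eqP.
  by rewrite mulf_eq0 (negbTE vv0) /= => /eqP.
move=> H; apply/matrixP => i j; rewrite (ord1 j) mass_actionE H mxE; ring.
Qed.

Definition ww (kappa : 'cV[R]_m.+1) (x : 'cV[R]_s.+1) (k : 'I_s.+1) : R :=
  \sum_j lam j * kappa j 0 * Defs.dmonom alpha j k x.

Definition wv kappa x := \sum_k ww kappa x k * vv k.

Lemma jacE kappa x i k : jac alpha beta kappa x i k = vv i * ww kappa x k.
Proof.
rewrite /jac mxE /ww mulr_sumr; apply: eq_bigr => j _.
rewrite N_rank1; ring.
Qed.

Lemma NT_ne0 : N^T != 0.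
Proof.
apply/eqP => /matrixP /(_ ord0 ord0); rewrite !mxE => H.
by move: Hlab; rewrite mxE H eqxx.
Qed.

Lemma nondegE kappa x : Defs.nondegenerate alpha beta kappa x = (wv kappa x != 0).
Proof.
have E : N^T *m (jac alpha beta kappa x)^T = wv kappa x *: N^T.
  apply/matrixP => j i; rewrite mxE [RHS]mxE /wv mulr_suml; apply: eq_bigr => k _.
  rewrite [N^T _ _]mxE [_^T k i]mxE [N^T j i]mxE jacE !N_rank1; ring.
rewrite /Defs.nondegenerate E.
have [->|nz] := eqVneq (wv kappa x) 0.
  rewrite scale0r; apply/negP => /andP [_ H].
  by move: NT_ne0; rewrite (submx0null H) eqxx.
by apply/eqmxP; apply: eqmx_scale.
Qed.

Lemma stableE kappa x : Defs.stable alpha beta kappa x <-> wv kappa x < 0.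
Proof.
pose J := map_mx (fun r : R => (r%:C)%C) (jac alpha beta kappa x).
rewrite /Defs.stable -/J.
have JE : forall i k, J i k = (vv i)%:C%C * (ww kappa x k)%:C%C.
  by move=> i k; rewrite /J mxE jacE rmorphM.
have key : forall (u : 'rV[R[i]]_s.+1) k,
   (u *m J) 0 k = (\sum_i u 0 i * (vv i)%:C%C) * (ww kappa x k)%:C%C.
  move=> u k; rewrite mxE mulr_suml; apply: eq_bigr => i _; rewrite JE; ring.
split.
  move=> [Hnd Heig]; move: Hnd; rewrite nondegE => Hnd.
  pose u : 'rV[R[i]]_s.+1 := \row_k (ww kappa x k)%:C%C.
  have Hu : u *m J = (wv kappa x)%:C%C *: u.
    apply/rowP => k; rewrite key !mxE; congr (_ * _).
    rewrite /wv rmorph_sum; apply: eq_bigr => i _; rewrite mxE rmorphM //.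
  have unz : u != 0.
    apply/eqP => /rowP Hu0; move: Hnd; rewrite /wv big1 ?eqxx // => k _.
    have := Hu0 k; rewrite !mxE => /(congr1 (@complex.Re R)) /= ->.
    by rewrite mul0r.
  have := Heig ((wv kappa x)%:C%C); apply.
    by apply/eigenvalueP; exists u.
  by apply/eqP => /(congr1 (@complex.Re R)) /= /eqP; rewrite (negbTE Hnd).
move=> Hlt; split; first by rewrite nondegE lt_eqF.
move=> lam0 /eigenvalueP [u Hu unz] lnz.
set sig := \sum_i u 0 i * (vv i)%:C%C.
have Hk : forall k, sig * (ww kappa x k)%:C%C = lam0 * u 0 k.
  by move=> k; rewrite -key Hu mxE.
have [k0 k0nz] : exists k, u 0 k != 0.
  apply/existsP; move: unz; apply: contraR => /existsPn H.
  by apply/eqP/rowP => k; rewrite mxE; apply/eqP; have := H k; rewrite negbK.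
have signz : sig != 0.
  apply: contraNneq k0nz => H; move: (Hk k0); rewrite H mul0r => /esym /eqP.
  by rewrite mulf_eq0 (negbTE lnz).
have : sig * (wv kappa x)%:C%C = lam0 * sig.
  rewrite /wv rmorph_sum mulr_sumr /sig mulr_sumr; apply: eq_bigr => k _.
  by rewrite rmorphM mulrA Hk; ring.
rewrite [lam0 * _]mulrC => /(mulfI signz) <-.
by [].
Qed.
End Glue.


Lemma deriv_prod_seq (R : comNzRingType) (I : eqType) (r : seq I) (F : I -> {poly R}) :
  uniq r ->
  (\prod_(i <- r) F i)^`() = \sum_(k <- r) (F k)^`() * \prod_(i <- r | i != k) F i.
Proof.
elim: r => [|a r IH] /=.
  by rewrite !big_nil -polyC1 derivC.
move=> /andP [anr ur].
rewrite !big_cons derivM IH // eqxx /= mulr_sumr; congr (_ * _ + _).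
  rewrite big_seq_cond [RHS]big_seq_cond; apply: eq_bigl => i.
  case: (boolP (i \in r)) => //= ir; apply/esym/eqP => E; move: anr; by rewrite -E ir.
rewrite [LHS]big_seq [RHS]big_seq; apply: eq_bigr => k kr.
rewrite big_cons; case: eqP => /= [E|_]; first by move: anr; rewrite E kr.
by rewrite mulrCA.
Qed.

Lemma deriv_prod (R : comNzRingType) n (F : 'I_n -> {poly R}) :
  (\prod_(i < n) F i)^`() = \sum_(k < n) (F k)^`() * \prod_(i < n | i != k) F i.
Proof. exact: deriv_prod_seq (index_enum_uniq _). Qed.

Section Line.
Variables (R : realType) (s m : nat) (alpha beta : 'M[nat]_(s.+1, m.+1)).
Hypothesis Hdim : stoich_dim R alpha beta = 1%N.
Hypothesis Hlab : stoich R alpha beta ord0 ord0 != 0.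

Local Notation v := (vv R alpha beta).
Local Notation lm := (lam R alpha beta).

Definition bb (c : 'cV[R]_s) : 'cV[R]_s.+1 :=
  \col_i (if unlift ord0 i is Some i' then - c i' 0 / v ord0 else 0).
Definition phi c (t : R) : 'cV[R]_s.+1 := \col_i (bb c i 0 + t * v i).
Definition linP c i : {poly R} := (bb c i 0)%:P + v i *: 'X.
Definition mP c j := \prod_i (linP c i) ^+ alpha i j.
Definition hP (kappa : 'cV[R]_m.+1) c := \sum_j (lm j * kappa j 0) *: mP c j.
Definition Ipos c t := forall i, 0 < phi c t i 0.

Lemma v0nz : v ord0 != 0. Proof. exact: Hlab. Qed.

Lemma phi0 c t : phi c t ord0 0 = t * v ord0.
Proof. by rewrite !mxE unlift_none add0r. Qed.

Lemma phi_inj c : injective (phi c).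
Proof.
move=> t t' /matrixP /(_ ord0 0); rewrite !phi0 => /(mulIf v0nz). done.
Qed.

Lemma phi_lift c t i : phi c t (lift ord0 i) 0 = - c i 0 / v ord0 + t * v (lift ord0 i).
Proof. by rewrite !mxE liftK. Qed.

Lemma compat_phi c t : nonneg_vec (phi c t) -> compat_class alpha beta c (phi c t).
Proof.
move=> H; split => // i.
rewrite phi0 phi_lift.
change (v (lift ord0 i) * (t * v ord0) - v ord0 * (- c i 0 / v ord0 + t * v (lift ord0 i)) = c i 0).
by field; apply: v0nz.
Qed.

Lemma compat_inv c x : compat_class alpha beta c x -> x = phi c (x ord0 0 / v ord0).
Proof.
move=> [_ H]; apply/matrixP => i j; rewrite (ord1 j).
case: (unliftP ord0 i) => [i'|] ->.
  rewrite phi_lift; have := H i'.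
  change (v (lift ord0 i') * x ord0 0 - v ord0 * x (lift ord0 i') 0 = c i' 0 -> 
      x (lift ord0 i') 0 = - c i' 0 / v ord0 + x ord0 0 / v ord0 * v (lift ord0 i')).
  move=> <-; by field; apply: v0nz.
by rewrite phi0 divfK // v0nz.
Qed.

Lemma linP_eval c i t : (linP c i).[t] = phi c t i 0.
Proof. by rewrite /linP hornerD hornerC hornerZ hornerX /phi !mxE mulrC. Qed.

Lemma hP_eval kappa c t : (hP kappa c).[t] = gg alpha beta kappa (phi c t).
Proof.
rewrite /hP horner_sum /gg; apply: eq_bigr => j _.
rewrite hornerZ /mP horner_prod /Defs.monom; congr (_ * _); apply: eq_bigr => i _.
by rewrite horner_exp linP_eval.
Qed.

Lemma hP_deriv kappa c t : (hP kappa c)^`().[t] = wv alpha beta kappa (phi c t).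
Proof.
rewrite /hP raddf_sum horner_sum /wv /ww.
under [RHS]eq_bigr do rewrite mulr_suml.
rewrite exchange_big /=; apply: eq_bigr => j _.
rewrite derivZ hornerZ /mP deriv_prod horner_sum mulr_sumr; apply: eq_bigr => k _.
rewrite deriv_exp hornerM horner_prod hornerMn hornerM horner_exp /linP derivD derivC derivZ derivX.
rewrite add0r alg_polyC hornerC -/(linP c k) linP_eval /Defs.dmonom.
have -> : \prod_(i < s.+1 | i != k) ((linP c i) ^+ alpha i j).[t] =
          \prod_(i < s.+1 | i != k) phi c t i 0 ^+ alpha i j.
  by apply: eq_bigr => i _; rewrite horner_exp linP_eval.
rewrite -mulr_natl; ring.
Qed.
End Line.


Lemma has_card_transfer (R : eqType) (T : eqType) (P : R -> Prop) (Q : T -> Prop)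
  (f : R -> T) (g : T -> R) :
  injective f -> cancel f g -> (forall x, Q x <-> exists t, x = f t /\ P t) ->
  forall k, has_card Q k <-> has_card P k.
Proof.
move=> finj fK HQ k; split.
  move=> [S [uS HS sS]]; exists (map g S); split.
  - rewrite map_inj_in_uniq // => x y /HS /HQ [t [-> _]] /HS /HQ [t' [-> _]].
    by rewrite !fK => ->.
  - move=> t; split.
      move=> Pt; have : Q (f t) by apply/HQ; exists t.
      by move/HS => H; apply/mapP; exists (f t); rewrite ?fK.
    move/mapP => [x /HS /HQ [t' [-> Pt']] ->]; by rewrite fK.
  - by rewrite size_map.
move=> [S [uS HS sS]]; exists (map f S); split.
- by rewrite map_inj_uniq.
- move=> x; split.
    by move/HQ => [t [-> /HS Pt]]; apply: map_f.
  by move/mapP => [t /HS Pt ->]; apply/HQ; exists t.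
- by rewrite size_map.
Qed.

Section Corr.
Variables (R : realType) (s m : nat) (alpha beta : 'M[nat]_(s.+1, m.+1)).
Hypothesis Hdim : stoich_dim R alpha beta = 1%N.
Hypothesis Hlab : stoich R alpha beta ord0 ord0 != 0.

Local Notation v := (vv R alpha beta).

Definition ZpP kappa c (t : R) := Ipos alpha beta c t /\ (hP alpha beta kappa c).[t] = 0.
Definition ZsP kappa c (t : R) := ZpP kappa c t /\ (hP alpha beta kappa c)^`().[t] < 0.

Lemma pos_ss_iff kappa c x : pos_ss_in alpha beta kappa c x <->
  exists t, x = phi alpha beta c t /\ ZpP kappa c t.
Proof.
split.
  move=> [[[Hnn Hma] Hpos] Hcc]; exists (x ord0 0 / v ord0).
  have Ex := compat_inv Hlab Hcc.
  split => //; split.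
    by move=> i; rewrite -Ex; apply: Hpos.
  by rewrite hP_eval -Ex; apply/(mass_action0 Hdim Hlab).
move=> [t [-> [HI H0]]].
have nn : nonneg_vec (phi alpha beta c t) by move=> i; apply: ltW.
split; last exact: compat_phi.
split => //; split => //; apply/(mass_action0 Hdim Hlab); by rewrite -hP_eval.
Qed.

Lemma stab_iff kappa c x : stab_pos_ss_in alpha beta kappa c x <->
  exists t, x = phi alpha beta c t /\ ZsP kappa c t.
Proof.
split.
  move=> [/pos_ss_iff [t [Ex Zt]] Hst]; exists t; split => //; split => //.
  by rewrite hP_deriv -Ex; apply/(stableE Hdim Hlab).
move=> [t [Ex [Zt Hd]]]; split; first by apply/pos_ss_iff; exists t.
by rewrite Ex; apply/(stableE Hdim Hlab); rewrite -hP_deriv.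
Qed.

Lemma card_pos kappa c k : has_card (pos_ss_in alpha beta kappa c) k <-> has_card (ZpP kappa c) k.
Proof.
apply: (@has_card_transfer _ _ _ _ (phi alpha beta c) (fun x => x ord0 0 / v ord0)).
- exact: phi_inj.
- by move=> t; rewrite phi0 mulfK.
- exact: pos_ss_iff.
Qed.

Lemma card_stab kappa c k : has_card (stab_pos_ss_in alpha beta kappa c) k <-> has_card (ZsP kappa c) k.
Proof.
apply: (@has_card_transfer _ _ _ _ (phi alpha beta c) (fun x => x ord0 0 / v ord0)).
- exact: phi_inj.
- by move=> t; rewrite phi0 mulfK.
- exact: stab_iff.
Qed.
End Corr.


Section Analysis.
Variable R : realType.

Lemma min_pos (x y : R) : 0 < x -> 0 < y -> exists2 d, 0 < d & d <= x /\ d <= y.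
Proof.
move=> hx hy; have [le|lt] := leP x y.
  by exists x.
by exists y => //; split => //; apply: ltW.
Qed.

Lemma fin_delta (T : eqType) (P : T -> R -> Prop) (S : seq T) :
  (forall i (d d' : R), 0 < d' -> d' <= d -> P i d -> P i d') ->
  (forall i, i \in S -> exists2 d : R, 0 < d & P i d) ->
  exists2 d : R, 0 < d & forall i, i \in S -> P i d.
Proof.
move=> mono; elim: S => [|a S IH] H.
  by exists 1 => //.
have [d1 d1p P1] := H a (mem_head _ _).
have [d2 d2p P2] := IH (fun i iS => H i (mem_behead (s := a :: S) iS)).
have [d dp [dd1 dd2]] := min_pos d1p d2p.
exists d => // i; rewrite inE => /orP [/eqP ->|iS].
  exact: mono P1.
exact: mono (P2 _ iS).
Qed.

Lemma local_sign (h : {poly R}) a :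
  h.[a] = 0 -> h^`().[a] != 0 ->
  exists2 e : R, 0 < e & forall t : R, `|t - a| < e -> t != a -> 0 < h.[t] * h^`().[a] * (t - a).
Proof.
move=> ha hd.
have /factor_theorem [q Hq] : root h a by apply/eqP.
have Eq : h^`().[a] = q.[a].
  rewrite Hq derivM hornerD !hornerM derivB derivX derivC subr0 !hornerE; ring.
have qa : 0 < `|q.[a]| by rewrite normr_gt0 -Eq.
have [e ep He] := poly_cont a q qa.
exists e => // t Ht tna.
have := He t Ht; rewrite ltr_norml => /andP [h1 h2].
have qq : 0 < q.[t] * q.[a].
  rewrite Eq in hd.
  case: (ltrP 0 q.[a]) => qa0.
    rewrite gtr0_norm // in h1 h2; nra.
  have qa0' : q.[a] < 0 by rewrite lt_neqAle qa0 andbT.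
  rewrite ltr0_norm // in h1 h2; nra.
rewrite Eq Hq hornerM !hornerE.
have : 0 < (t - a) ^+ 2 by rewrite exprn_even_gt0 //= subr_eq0.
move: qq; set u := q.[t] * q.[a]; set w := (t - a) ^+ 2 => qq ww.
have -> : q.[t] * (t - a) * q.[a] * (t - a) = u * w by rewrite /u /w; ring.
exact: mulr_gt0.
Qed.

Lemma root_between (h : {poly R}) (a b : R) : a < b -> h.[a] = 0 -> h.[b] = 0 ->
  0 < h^`().[a] * h^`().[b] -> exists r, [/\ a < r, r < b & h.[r] = 0].
Proof.
move=> ab ha hb hab.
have ha' : h^`().[a] != 0 by apply: contraTneq hab => ->; rewrite mul0r ltxx.
have hb' : h^`().[b] != 0 by apply: contraTneq hab => ->; rewrite mulr0 ltxx.
have [ea eap Ha] := local_sign ha ha'.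
have [eb ebp Hb] := local_sign hb hb'.
have ba : 0 < b - a by rewrite subr_gt0.
have [da dap [da1 da2]] := min_pos eap ba.
have [db dbp [db1 db2]] := min_pos ebp ba.
set t1 := a + da / 3%:R. set t2 := b - db / 3%:R.
have X : 0 < h.[t1] * h^`().[a] * (t1 - a).
  apply: Ha; rewrite /t1.
    rewrite addrAC subrr add0r ger0_norm; lra.
  apply/negP => /eqP; rewrite /t1 => E; lra.
have Y : 0 < h.[t2] * h^`().[b] * (t2 - b).
  apply: Hb; rewrite /t2.
    rewrite addrAC subrr add0r normrN ger0_norm; lra.
  apply/negP => /eqP; rewrite /t2 => E; lra.
have t1a : 0 < t1 - a by rewrite /t1; lra.
have t2b : t2 - b < 0 by rewrite /t2; lra.
have X' : 0 < h.[t1] * h^`().[a] by move: X; rewrite pmulr_lgt0.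
have Y' : h.[t2] * h^`().[b] < 0 by move: Y; rewrite nmulr_lgt0.
have P : h.[t1] * h.[t2] * (h^`().[a] * h^`().[b]) < 0.
  have -> : h.[t1] * h.[t2] * (h^`().[a] * h^`().[b]) = (h.[t1] * h^`().[a]) * (h.[t2] * h^`().[b]) by ring.
  by rewrite pmulr_rlt0.
have P' : h.[t1] * h.[t2] < 0 by move: P; rewrite pmulr_llt0.
have t12 : t1 <= t2 by rewrite /t1 /t2; lra.
have [r] := poly_ivtoo t12 P'.
rewrite in_itv /= => /andP [r1 r2] /eqP hr.
exists r; split => //.
  by apply: lt_trans r1; rewrite /t1; lra.
by apply: lt_trans r2 _; rewrite /t2; lra.
Qed.

Lemma W_nz (h p : {poly R}) (t1 : R) : h != 0 -> h.[t1] = 0 -> p.[t1] != 0 ->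
  h^`() * p - h * p^`() != 0.
Proof.
move=> hnz ht pt.
have [k [q qr Hq]] := multiplicity_XsubC h t1.
move: qr; rewrite hnz /= => qr.
case: k Hq => [|k] Hq.
  by move: qr; rewrite expr0 mulr1 in Hq; rewrite /root -Hq ht eqxx.
set L := ('X - t1%:P).
have E : h^`() * p - h * p^`() =
   L ^+ k * (L * (q^`() * p - q * p^`()) + k.+1%:R *: (q * p)).
  rewrite Hq derivM deriv_exp /L derivB derivX derivC subr0 mul1r.
  rewrite exprS -mulr_natl scalerAl -mul_polyC polyCMn polyC1; ring.
rewrite E mulf_eq0 negb_or expf_neq0 /=; last by rewrite /L polyXsubC_eq0.
apply/negP => /eqP /(congr1 (fun r => r.[t1])).
rewrite hornerD hornerM /L hornerXsubC subrr mul0r add0r hornerZ hornerM horner0 => /eqP.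
rewrite mulf_eq0 pnatr_eq0 /= mulf_eq0 (negbTE pt) orbF.
by move: qr; rewrite /root => /negbTE ->.
Qed.

Lemma open_infinite (I : R -> Prop) (t0 : R) (S : seq R) : I t0 ->
  (exists2 d : R, 0 < d & forall t, `|t - t0| < d -> I t) ->
  (forall t, I t -> t \in S) -> False.
Proof.
move=> _ [d dp Hd] HS.
pose f (n : nat) : R := t0 + d / (n.+2)%:R.
have finj : injective f.
  move=> a b; rewrite /f => /addrI /(mulfI (lt0r_neq0 dp)) /invr_inj /eqP.
  by rewrite eqr_nat => /eqP [].
pose L := map f (iota 0 (size S).+1).
have uL : uniq L by rewrite map_inj_uniq // iota_uniq.
have sub : {subset L <= S}.
  move=> x /mapP [n _ ->]; apply: HS; apply: Hd; rewrite /f addrAC subrr add0r.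
  have np : 0 < (n.+2)%:R :> R by rewrite ltr0n.
  rewrite ger0_norm; last by rewrite divr_ge0 // ltW.
  rewrite ltr_pdivrMr // ltr_pMr // ltr1n //.
have := uniq_leq_size uL sub.
by rewrite size_map size_iota ltnn.
Qed.

Definition sc (F : {poly R}) (x y : R) : nat := (F.[x] * F.[y] < 0)%R.

Lemma build (F : {poly R}) (I : R -> Prop) (S : seq R) (d : R) :
  (forall a b r, I a -> I b -> a <= r -> r <= b -> I r) -> 0 < d ->
  (forall t, t \in S -> [/\ I t, I (t - d / 2%:R) & I (t + d / 2%:R)]) ->
  (forall t t', t \in S -> t' \in S -> t != t' -> 2%:R * d < `|t - t'|) ->
  uniq S ->
  exists L : seq R, [/\ uniq L,
    size L = (\sum_(t <- S) (sc F (t - d / 2%:R) t + sc F t (t + d / 2%:R)))%N,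
    forall x, x \in L -> I x /\ F.[x] = 0
  & forall x, x \in L -> exists2 t, t \in S & `|x - t| < d].
Proof.
move=> conv dp; elim: S => [|t S IH] HI Hgap /=.
  by move=> _; exists [::]; split => //; rewrite big_nil.
move=> /andP [tS uS].
have [L [uL sL HL HLc]] : exists L : seq R, [/\ uniq L,
    size L = (\sum_(t <- S) (sc F (t - d / 2%:R) t + sc F t (t + d / 2%:R)))%N,
    forall x, x \in L -> I x /\ F.[x] = 0
  & forall x, x \in L -> exists2 t, t \in S & `|x - t| < d].
  apply: IH => //.
  - by move=> u uS'; apply: HI; rewrite inE uS' orbT.
  - by move=> u u' uS' u'S; apply: Hgap; rewrite inE ?uS' ?u'S orbT.
have [It Ia Ib] := HI t (mem_head _ _).
set a := t - d / 2%:R; set b := t + d / 2%:R.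
have at_ : a < t by rewrite /a; lra.
have tb : t < b by rewrite /b; lra.
pose Ra : seq R := [::]. 
have [La [uLa sLa HLa HLac]] : exists La : seq R, [/\ uniq La,
    size La = (sc F a t + sc F t b)%N,
    forall x, x \in La -> I x /\ F.[x] = 0
  & forall x, x \in La -> (a < x < t) || (t < x < b)].
  have sideA : F.[a] * F.[t] < 0 -> exists x, [/\ a < x, x < t, I x & F.[x] = 0].
    move=> H; have [x] := poly_ivtoo (ltW at_) H; rewrite in_itv /= => /andP [x1 x2] /eqP rx.
    exists x; split => //; apply: (conv a t) => //; exact: ltW.
  have sideB : F.[t] * F.[b] < 0 -> exists x, [/\ t < x, x < b, I x & F.[x] = 0].
    move=> H; have [x] := poly_ivtoo (ltW tb) H; rewrite in_itv /= => /andP [x1 x2] /eqP rx.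
    exists x; split => //; apply: (conv t b) => //; exact: ltW.
  rewrite /sc; case: (boolP (F.[a] * F.[t] < 0)) => HA; case: (boolP (F.[t] * F.[b] < 0)) => HB.
  - have [x [x1 x2 x3 x4]] := sideA HA; have [y [y1 y2 y3 y4]] := sideB HB.
    exists [:: x; y]; split => //.
    + rewrite /= inE andbT; apply/negP => /eqP E; move: x2 y1; rewrite E; lra.
    + by move=> z; rewrite !inE => /orP [] /eqP ->.
    + by move=> z; rewrite !inE => /orP [] /eqP ->; rewrite ?x1 ?x2 ?y1 ?y2 ?orbT.
  - have [x [x1 x2 x3 x4]] := sideA HA.
    exists [:: x]; split => //.
    + by move=> z; rewrite !inE => /eqP ->.
    + by move=> z; rewrite !inE => /eqP ->; rewrite x1 x2.
  - have [y [y1 y2 y3 y4]] := sideB HB.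
    exists [:: y]; split => //.
    + by move=> z; rewrite !inE => /eqP ->.
    + by move=> z; rewrite !inE => /eqP ->; rewrite y1 y2 orbT.
  - by exists [::].
exists (La ++ L); split.
- rewrite cat_uniq uLa uL andbT /=; apply/hasPn => x xL; apply/negP => xLa.
  have [u uS' xu] := HLc x xL.
  have tu : t != u by apply: contraNneq tS => ->.
  have := Hgap t u (mem_head _ _) (mem_behead (s := t :: S) uS') tu.
  have : `|x - t| < d / 2%:R.
    move: (HLac x xLa) => /orP [] /andP [h1 h2]; rewrite ltr_norml; apply/andP; split;
      rewrite /a /b in h1 h2 *; lra.
  move: xu; rewrite !ltr_norml => /andP [h1 h2] /andP [h3 h4].
  case: (lerP 0 (t - u)) => tu0.
    rewrite ger0_norm //; lra.
  rewrite ltr0_norm //; lra.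
- by rewrite size_cat sLa sL big_cons.
- by move=> x; rewrite mem_cat => /orP [/HLa|/HL].
- move=> x; rewrite mem_cat => /orP [xLa|xL].
    exists t; first exact: mem_head.
    move: (HLac x xLa) => /orP [] /andP [h1 h2]; rewrite ltr_norml; apply/andP; split;
      rewrite /a /b in h1 h2 *; lra.
  by have [u uS' xu] := HLc x xL; exists u => //; rewrite inE uS' orbT.
Qed.

Lemma sign_keep (H P : R) : H != 0 -> 0 < P ->
  exists2 e : R, 0 < e & forall y, `|y| <= e -> 0 < (H + y * P) * H.
Proof.
move=> Hn Pp; exists (`|H| / (2%:R * P)).
  by rewrite divr_gt0 ?normr_gt0 // mulr_gt0.
have PP : 0 < 2%:R * P by rewrite mulr_gt0.
move=> y; rewrite ler_pdivlMr // => Hy.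
have Hy2 : `|y| * P <= `|H| / 2%:R by rewrite ler_pdivlMr //; lra.
have Hb : - (`|y| * P) <= y * P <= `|y| * P.
  rewrite -ler_norml normrM (gtr0_norm Pp) //.
move/andP: Hb => [b1 b2].
move: Hy2 b1 b2; set q := `|y| * P; set z := y * P => Hy2 b1 b2.
case: (ltrP 0 H) => H0.
  rewrite gtr0_norm // in Hy2. apply: mulr_gt0 => //; lra.
have H0' : H < 0 by rewrite lt_neqAle H0 Hn.
rewrite ltr0_norm // in Hy2; rewrite nmulr_lgt0 //; lra.
Qed.

Lemma pick_avoid (B : seq R) (e : R) : 0 < e -> exists y, [/\ 0 < y, y <= e & y \notin B].
Proof.
move=> ep.
pose f (n : nat) : R := e / (n.+1)%:R.
have finj : injective f.
  move=> a b; rewrite /f => /(mulfI (lt0r_neq0 ep)) /invr_inj /eqP.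
  by rewrite eqr_nat => /eqP [].
pose L := map f (iota 0 (size B).+1).
have uL : uniq L by rewrite map_inj_uniq // iota_uniq.
have : ~~ all (mem B) L.
  apply/negP => /allP sub; have := uniq_leq_size uL sub.
  by rewrite size_map size_iota ltnn.
move=> /allPn [x /mapP [n _ ->] nB]; exists (f n); split => //.
  by rewrite /f divr_gt0 // ltr0n.
have h1 : 1 <= (n.+1)%:R :> R by rewrite ler1n.
rewrite /f ler_pdivrMr ?ltr0n //; nra.
Qed.

Lemma sum_const_seq (T : eqType) (r : seq T) (f : T -> nat) (k : nat) :
  (forall t, t \in r -> f t = k) -> (\sum_(t <- r) f t)%N = (size r * k)%N.
Proof.
elim: r => [|a r IH] H; first by rewrite big_nil.
rewrite big_cons IH; last by move=> t tr; apply: H; rewrite inE tr orbT.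
by rewrite H ?mem_head // mulSn.
Qed.

Lemma pair_lemma (H F1 F2 P y1 y2 : R) : 0 < F1 * H -> 0 < F2 * H -> 0 < P ->
  0 < y1 -> y2 < 0 ->
  (nat_of_bool (F1 * (y1 * P) < 0)%R + nat_of_bool (F2 * (y2 * P) < 0)%R)%N = 1%N.
Proof.
move=> h1 h2 Pp y1p y2n.
have y1P : 0 < y1 * P by rewrite mulr_gt0.
have y2P : y2 * P < 0 by rewrite nmulr_rlt0.
case: (ltrP 0 H) => H0.
  have f1 : 0 < F1 by move: h1; rewrite pmulr_lgt0.
  have f2 : 0 < F2 by move: h2; rewrite pmulr_lgt0.
  have -> : (F1 * (y1 * P) < 0) = false by apply/negbTE; rewrite -leNgt mulr_ge0 // ltW.
  by have -> : (F2 * (y2 * P) < 0) = true by rewrite pmulr_rlt0.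
have Hn : H < 0.
  by rewrite lt_neqAle H0 andbT; apply: contraTneq h1 => ->; rewrite mulr0 ltxx.
have f1 : F1 < 0 by move: h1; rewrite nmulr_lgt0.
have f2 : F2 < 0 by move: h2; rewrite nmulr_lgt0.
have -> : (F1 * (y1 * P) < 0) = true by rewrite nmulr_rlt0.
have -> : (F2 * (y2 * P) < 0) = false by apply/negbTE; rewrite -leNgt; apply: ltW; rewrite nmulr_rgt0.
by [].
Qed.

Lemma perturb (h p : {poly R}) (I : R -> Prop) (S : seq R) (e0 : R) :
  (forall a b r, I a -> I b -> a <= r -> r <= b -> I r) ->
  (forall t, I t -> exists2 d : R, 0 < d & forall t', `|t' - t| < d -> I t') ->
  (forall t, I t -> 0 < p.[t]) ->
  uniq S -> (forall t, I t /\ h.[t] = 0 <-> t \in S) -> (0 < size S)%N -> 0 < e0 ->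
  exists y : R, [/\ `|y| < e0,
     exists L : seq R, [/\ uniq L, (size S <= size L)%N &
        forall t, t \in L -> I t /\ (h + y *: p).[t] = 0]
   & forall t, I t -> (h + y *: p).[t] = 0 -> (h + y *: p)^`().[t] != 0].
Proof.
move=> conv openI pP uS HS sS e0p.
have [t0 t0S] : exists t0, t0 \in S by case: S sS {uS HS} => // t0 S' _; exists t0; exact: mem_head.
have [It0 ht0] := (HS t0).2 t0S.
have hnz : h != 0.
  apply/eqP => h0; apply: (open_infinite (I := I) It0 (openI t0 It0)) => t It.
  by apply/HS; split => //; rewrite h0 horner0.
have Wnz := W_nz hnz ht0 (lt0r_neq0 (pP t0 It0)).
set W := h^`() * p - h * p^`() in Wnz.
pose P1 := fun t d => (forall t', `|t' - t| < d -> I t') /\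
      (forall t', t' \in S -> t != t' -> 2%:R * d < `|t - t'|).
have [d dp Hd] : exists2 d : R, 0 < d & forall t, t \in S -> P1 t d.
  apply: fin_delta; rewrite /P1.
- move=> i a b bp ba [H1 H2]; split.
    by move=> t' Ht'; apply: H1; apply: lt_le_trans ba.
  move=> t' t'S nt; apply: le_lt_trans (H2 t' t'S nt).
  by rewrite ler_pM2l // ltr0n.
- move=> t tS.
  have [d1 d1p H1] := openI t ((HS t).2 tS).1.
  have [d2 d2p H2] : exists2 d : R, 0 < d & forall t', t' \in S -> (t != t' -> 2%:R * d < `|t - t'|).
    apply: (@fin_delta _ (fun t' d => t != t' -> 2%:R * d < `|t - t'|)).
    - move=> i a b bp ba H nt; apply: le_lt_trans (H nt).
      by rewrite ler_pM2l // ltr0n.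
    - move=> t' _; case: (eqVneq t t') => [->|nt].
        by exists 1 => //; rewrite eqxx.
      exists (`|t - t'| / 3%:R) => [|_]; first by rewrite divr_gt0 ?normr_gt0 ?subr_eq0 // ltr0n.
      have : 0 < `|t - t'| by rewrite normr_gt0 subr_eq0.
      set q := `|t - t'|; lra.
  have [dd ddp [dd1 dd2]] := min_pos d1p d2p.
  exists dd => //; split.
    by move=> t' Ht'; apply: H1; apply: lt_le_trans dd1.
  move=> t' t'S nt; apply: le_lt_trans (H2 t' t'S nt).
  by rewrite ler_pM2l // ltr0n.
set hd := d / 2%:R.
have hdp : 0 < hd by rewrite /hd; lra.
have HIab : forall t, t \in S -> [/\ I t, I (t - hd) & I (t + hd)].
  move=> t tS; have [H1 _] := Hd t tS; split.
  - exact: ((HS t).2 tS).1.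
  - by apply: H1; rewrite addrAC subrr add0r normrN ger0_norm ?ltW //; rewrite /hd; lra.
  - by apply: H1; rewrite addrAC subrr add0r ger0_norm ?ltW //; rewrite /hd; lra.
have Hgap : forall t t', t \in S -> t' \in S -> t != t' -> 2%:R * d < `|t - t'|.
  by move=> t t' tS t'S; apply: (Hd t tS).2.
have hab : forall t, t \in S -> h.[t - hd] != 0 /\ h.[t + hd] != 0.
  move=> t tS; have [_ Ia Ib] := HIab t tS; split; apply/eqP => E.
    have aS : t - hd \in S by apply/HS.
    have := Hgap t (t - hd) tS aS.
    have -> : t != t - hd by apply/negP => /eqP E'; move: E'; rewrite /hd => E'; lra.
    move=> /(_ isT); rewrite opprB addrC subrK ger0_norm ?ltW //; rewrite /hd; lra.
  have bS : t + hd \in S by apply/HS.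
  have := Hgap t (t + hd) tS bS.
  have -> : t != t + hd by apply/negP => /eqP E'; move: E'; rewrite /hd => E'; lra.
  move=> /(_ isT); rewrite opprD addNKr normrN ger0_norm ?ltW //; rewrite /hd; lra.
pose P2 := fun t e => forall y, `|y| <= e ->
      0 < (h.[t - hd] + y * p.[t - hd]) * h.[t - hd] /\
      0 < (h.[t + hd] + y * p.[t + hd]) * h.[t + hd].
have [e1 e1p He1] : exists2 e : R, 0 < e & forall t, t \in S -> P2 t e.
  apply: fin_delta; rewrite /P2.
- move=> i a b bp ba H y yb; apply: H; exact: le_trans ba.
- move=> t tS; have [ha hb] := hab t tS; have [_ Ia Ib] := HIab t tS.
  have [ea eap Ha] := sign_keep ha (pP _ Ia).
  have [eb ebp Hb] := sign_keep hb (pP _ Ib).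
  have [ee eep [ee1 ee2]] := min_pos eap ebp.
  exists ee => // y yb; split.
    by apply: Ha; apply: le_trans ee1.
  by apply: Hb; apply: le_trans ee2.
have e02 : 0 < e0 / 2%:R by lra.
have [e ep [ee1 ee2]] := min_pos e1p e02.
set Bd := map (fun tau => - h.[tau] / p.[tau]) (rootsR W).
have Fe : forall (y x : R), (h + y *: p).[x] = h.[x] + y * p.[x].
  by move=> y x; rewrite hornerD hornerZ.
have nondeg : forall y, y \notin Bd -> forall t, I t -> (h + y *: p).[t] = 0 ->
     (h + y *: p)^`().[t] != 0.
  move=> y yB t It; rewrite Fe => F0; apply/negP => /eqP F1.
  move: F1; rewrite derivD derivZ hornerD hornerZ => F1.
  have ptnz := lt0r_neq0 (pP t It).
  have hE : h.[t] = - (y * p.[t]) by rewrite -[h.[t]](addrK (y * p.[t])) F0 sub0r.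
  have hE' : h^`().[t] = - (y * p^`().[t]) by rewrite -[h^`().[t]](addrK (y * p^`().[t])) F1 sub0r.
  have Wt : root W t.
    by rewrite /root /W hornerD hornerN !hornerM hE hE'; apply/eqP; ring.
  have : t \in rootsR W.
    by rewrite -roots_on_rootsR // Wt andbT.
  move=> tW; move/negP: yB; apply; apply/mapP; exists t => //.
  by rewrite hE opprK mulfK.
have [y1 [y1p y1e y1B]] := pick_avoid Bd ep.
have [z [zp ze zB]] := pick_avoid (map -%R Bd) ep.
set y2 := - z.
have y2B : y2 \notin Bd.
  by apply: contra zB => H; apply/mapP; exists y2 => //; rewrite /y2 opprK.
set c := fun y : R => (\sum_(t <- S) (sc (h + y *: p) (t - hd) t + sc (h + y *: p) t (t + hd)))%N.
have csum : (c y1 + c y2)%N = (size S * 2)%N.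
  rewrite /c -big_split /=; apply: sum_const_seq => t tS.
  have [It Ia Ib] := HIab t tS.
  have ht : h.[t] = 0 := ((HS t).2 tS).2.
  have y1b : `|y1| <= e1 by rewrite ger0_norm; [exact: le_trans y1e ee1|exact: ltW].
  have y2b : `|y2| <= e1 by rewrite /y2 normrN ger0_norm; [exact: le_trans ze ee1|exact: ltW].
  have y2n : y2 < 0 by rewrite /y2 oppr_lt0.
  have [Ha1 Hb1] := He1 t tS y1 y1b; have [Ha2 Hb2] := He1 t tS y2 y2b.
  rewrite /sc !Fe ht !add0r.
  have A := pair_lemma Ha1 Ha2 (pP t It) y1p y2n.
  have B := pair_lemma Hb1 Hb2 (pP t It) y1p y2n.
  by rewrite [y1 * p.[t] * _]mulrC [y2 * p.[t] * _]mulrC addnACA A B.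
have Hbuild : forall y, exists L : seq R, [/\ uniq L, size L = c y &
    forall t, t \in L -> I t /\ (h + y *: p).[t] = 0].
  move=> y; have [L [uL sL HL _]] := build (h + y *: p) conv dp HIab Hgap uS.
  by exists L.
clearbody c.
have [y [yB ye ybig]] : exists y, [/\ y \notin Bd, `|y| <= e & (size S <= c y)%N].
  case: (leqP (size S) (c y1)) => H.
    exists y1; split => //; rewrite ger0_norm; [exact: y1e|exact: ltW].
  exists y2; split => //; first by rewrite /y2 normrN ger0_norm; [exact: ze|exact: ltW].
  move: csum H; generalize (c y1) (c y2) => a b E H.
  have : (a + size S < a + b)%N by rewrite E muln2 -addnn ltn_add2r.
  by rewrite ltn_add2l => /ltnW.
have [L [uL sL HL]] := Hbuild y.
exists y; split.
- by apply: le_lt_trans ye _; apply: le_lt_trans ee2 _; lra.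
- by exists L; split => //; rewrite sL.
- exact: nondeg.
Qed.
End Analysis.


Section Count.
Variable R : realType.

Definition enotsame (x y : R) : bool := ~~ (0 < x * y).
Definition isneg (z : R) : bool := z < 0.

Lemma path_count_neg (x : R) (d : seq R) : path enotsame x d ->
  ((count isneg (x :: d)).*2 <= size (x :: d) + isneg x)%N.
Proof.
elim: d x => [|y d IH] x /=.
  by move=> _; case: (isneg x).
move=> /andP [exy pd]; have := IH y pd => /=.
have nb : ~~ (isneg x && isneg y).
  apply/negP => /andP [xn yn]; move: exy; rewrite /enotsame /isneg in xn yn *.
  by rewrite (nmulr_rgt0 _ xn) yn.
move: nb; case: (isneg x); case: (isneg y) => //= _; generalize (count isneg d) (size d) => a n;
  rewrite /= ?add0n ?add1n ?addn0 ?addn1 -?muln2 => H; lia.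
Qed.

Lemma comb_bounds (d : seq R) :
  (forall i, (i.+1 < size d)%N -> enotsame (nth 0 d i) (nth 0 d i.+1)) ->
  ((count isneg d).*2 <= (size d).+1)%N /\
  ((forall z, z \in d -> z != 0) -> (size d <= (count isneg d).*2.+1)%N).
Proof.
move=> Hadj.
have sd : sorted enotsame d by apply/(sortedP 0).
have bound : forall d' : seq R, sorted enotsame d' ->
    ((count isneg d').*2 <= (size d').+1)%N.
  case=> [|x d'] //= pd; have := path_count_neg pd => /= H.
  apply: leq_trans H _; case: (isneg x) => /=; rewrite -?muln2; lia.
split; first exact: bound.
move=> nz.
have sd' : sorted enotsame (map -%R d).
  rewrite sorted_map; apply: sub_sorted sd => x y /=; by rewrite /enotsame mulrNN.
have := bound _ sd'; rewrite size_map count_map.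
have -> : count (preim -%R isneg) d = count (predC isneg) d.
  apply: eq_in_count => z zd /=; rewrite /isneg oppr_lt0.
  by rewrite lt_def (nz z zd) /= leNgt.
move=> H2; have := count_predC isneg d.
move: H2; generalize (count isneg d) (count (predC isneg) d).
move=> a b H E; rewrite -E in H *; rewrite -!muln2 in H *; lia.
Qed.

Lemma count_stable (h : {poly R}) (I : R -> Prop) (S : seq R) :
  (forall a b r, I a -> I b -> a <= r -> r <= b -> I r) ->
  uniq S -> (forall t, I t /\ h.[t] = 0 <-> t \in S) ->
  ((count (fun t => (h^`().[t] < 0)%R) S).*2 <= (size S).+1)%N /\
  ((forall t, t \in S -> h^`().[t] != 0) ->
     (size S <= (count (fun t => (h^`().[t] < 0)%R) S).*2.+1)%N).
Proof.
move=> conv uS HS.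
set s' := sort <=%R S.
have pS : perm_eq s' S by apply: permEl; exact: perm_sort.
have memS : s' =i S := perm_mem pS.
have sle : sorted <=%R s' by apply: sort_sorted; exact: le_total.
have slt : sorted <%R s' by rewrite lt_sorted_uniq_le sle (perm_uniq pS) uS.
set d := map (fun t => h^`().[t]) s'.
have cnt : count (fun t => (h^`().[t] < 0)%R) S = count isneg d.
  by rewrite count_map; rewrite -(permP pS).
have sz : size S = size d by rewrite size_map (perm_size pS).
have Hadj : forall i, (i.+1 < size d)%N -> enotsame (nth 0 d i) (nth 0 d i.+1).
  move=> i; rewrite size_map => Hi.
  have Hi' : (i < size s')%N by apply: ltnW.
  rewrite !(nth_map 0) // /enotsame; apply/negP => Hpos.
  set a := nth 0 s' i; set b := nth 0 s' i.+1.
  have ab : a < b by apply: (sorted_ltn_nth lt_trans) => //; rewrite inE.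
  have aS : a \in S by rewrite -memS mem_nth.
  have bS : b \in S by rewrite -memS mem_nth.
  have [Ia ha] := (HS a).2 aS; have [Ib hb] := (HS b).2 bS.
  have [r [ar rb hr]] := root_between ab ha hb Hpos.
  have Ir : I r by apply: (conv a b) => //; apply: ltW.
  have rS : r \in s' by rewrite memS; apply/HS.
  have jlt : (index r s' < size s')%N by rewrite index_mem.
  have Er : nth 0 s' (index r s') = r by rewrite nth_index.
  case: (leqP (index r s') i) => ji.
    have := (sorted_leq_nth le_trans lexx) 0 s' sle (index r s') i.
    rewrite !inE Er => /(_ jlt Hi' ji) ra.
    by move: (le_lt_trans ra ar); rewrite ltxx.
  have := (sorted_leq_nth le_trans lexx) 0 s' sle i.+1 (index r s').
  rewrite !inE Er => /(_ Hi jlt ji) br.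
  by move: (le_lt_trans br rb); rewrite ltxx.
have [B1 B2] := comb_bounds Hadj.
rewrite cnt sz; split => // Hnz; apply: B2 => z /mapP [t ts' ->].
by apply: Hnz; rewrite -memS.
Qed.
End Count.


Lemma max_exists (P : nat -> Prop) (N : nat) : (exists k, P k) ->
  (forall k, P k -> (k <= N)%N) -> exists K, P K /\ forall k, P k -> (k <= K)%N.
Proof.
elim: N => [|N IH] [k0 Pk0] Hb.
  exists 0%N; have := Hb k0 Pk0; rewrite leqn0 => /eqP E; rewrite E in Pk0.
  split; [exact: Pk0| exact: Hb].
case: (classic (P N.+1)) => HN.
  exists N.+1; split; [exact: HN| exact: Hb].
apply: IH; first by exists k0.
move=> k Pk; have := Hb k Pk; rewrite leq_eqVlt => /orP [/eqP E|] //.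
by rewrite E in Pk.
Qed.

Lemma hc_unique (T : eqType) (P : T -> Prop) k1 k2 : has_card P k1 -> has_card P k2 -> k1 = k2.
Proof.
move=> [S1 [u1 H1 <-]] [S2 [u2 H2 <-]].
have E : S1 =i S2.
  move=> x; apply/idP/idP => h; [exact: (H2 x).1 ((H1 x).2 h) | exact: (H1 x).1 ((H2 x).2 h)].
by apply/eqP; rewrite eq_sym -(uniq_size_uniq u1 E) u2.
Qed.

Lemma affine_conv (R : realType) (B V a b r : R) : 0 < B + a * V -> 0 < B + b * V -> a <= r -> r <= b ->
  0 < B + r * V.
Proof. move=> h1 h2 h3 h4; case: (lerP 0 V) => hv; nra. Qed.

Section Main.
Variables (R : realType) (s m : nat) (alpha beta : 'M[nat]_(s.+1, m.+1)).
Hypothesis Hdim : stoich_dim R alpha beta = 1%N.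
Hypothesis Hlab : stoich R alpha beta ord0 ord0 != 0.

Lemma linP_evalE c i (t : R) : (linP alpha beta c i).[t] = bb alpha beta c i 0 + t * vv R alpha beta i.
Proof. by rewrite /linP hornerD hornerC hornerZ hornerX mulrC. Qed.

Lemma Ipos_conv c (a b r : R) : Ipos alpha beta c a -> Ipos alpha beta c b -> a <= r -> r <= b ->
  Ipos alpha beta c r.
Proof.
move=> Ha Hb h1 h2 i; have := Ha i; have := Hb i; rewrite -!linP_eval !linP_evalE => u v.
exact: (affine_conv v u h1 h2).
Qed.

Lemma Ipos_open c (t : R) : Ipos alpha beta c t ->
  exists2 d : R, 0 < d & forall t', `|t' - t| < d -> Ipos alpha beta c t'.
Proof.
move=> Ht.
have [d dp Hd] : exists2 d : R, 0 < d & forall i, i \in enum 'I_s.+1 ->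
    (forall t', `|t' - t| < d -> 0 < phi alpha beta c t' i 0).
  apply: fin_delta.
    by move=> i a b bp ba H t' Ht'; apply: H; apply: lt_le_trans ba.
  move=> i _; have Hti := Ht i; rewrite -linP_eval in Hti.
  have [d dp Hd] := poly_cont t (linP alpha beta c i) Hti.
  exists d => // t' Ht'; have := Hd t' Ht'; rewrite ltr_norml -linP_eval => /andP [h1 h2].
  lra.
exists d => // t' Ht' i; apply: Hd => //; by rewrite mem_enum.
Qed.

Lemma pp_pos c (t : R) : Ipos alpha beta c t -> 0 < (mP alpha beta c ord0).[t].
Proof.
move=> Ht; rewrite /mP horner_prod; apply: prodr_gt0 => i _.
by rewrite horner_exp linP_eval; apply: exprn_gt0.
Qed.

Lemma lam0 : lam R alpha beta ord0 = 1.
Proof. by rewrite /lam divff. Qed.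

Lemma hP_shift kappa c (y : R) :
  hP alpha beta (kappa + y *: delta_mx ord0 ord0) c = hP alpha beta kappa c + y *: mP alpha beta c ord0.
Proof.
rewrite /hP.
under eq_bigr do rewrite !mxE mulrDr scalerDl.
rewrite big_split /=; congr (_ + _).
rewrite (bigD1 ord0) //= big1 ?addr0.
  by rewrite lam0 mulr1 mul1r.
move=> j /negbTE jn; by rewrite jn /= mulr0 mulr0 scale0r.
Qed.
End Main.


Unset Implicit Arguments.
Theorem corollary3p2 (R : realType) (s m : nat)
  (alpha beta : 'M[nat]_(s.+1, m.+1))
  (Hnet : is_network alpha beta)
  (Hdim : stoich_dim R alpha beta = 1%N)
  (Hlab : stoich R alpha beta ord0 ord0 != 0)
  (Npos : nat) (Hcap : cap_pos_is R alpha beta Npos) :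
  exists (kappa : 'cV[R]_m.+1) (c : 'cV[R]_s) (Nstab : nat),
    [/\ pos_vec kappa,
        has_card (pos_ss_in alpha beta kappa c) Npos,
        has_card (stab_pos_ss_in alpha beta kappa c) Nstab
      & cap_stab_is R alpha beta Nstab].
Proof.
move: Hcap => [nInf [[kap0 [c0 [kp0 HN0]]] maxN]].
have fin : forall (kappa : 'cV[R]_m.+1) (c : 'cV[R]_s), pos_vec kappa -> exists k, has_card (pos_ss_in alpha beta kappa c) k.
  move=> kappa c kp; apply: NNPP => H; apply: nInf; by exists kappa, c.
have finZ : forall (kappa : 'cV[R]_m.+1) (c : 'cV[R]_s), pos_vec kappa -> exists S, [/\ uniq S,
    (forall t, ZpP alpha beta kappa c t <-> t \in S) & (size S <= Npos)%N].
  move=> kappa c kp; have [k Hk] := fin kappa c kp.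
  have kN : (k <= Npos)%N by apply: maxN; exists kappa, c.
  have [S [uS HS sS]] := (card_pos Hdim Hlab kappa c k).1 Hk.
  by exists S; split => //; rewrite sS.
have stabcard : forall (kappa : 'cV[R]_m.+1) (c : 'cV[R]_s) (S : seq R), uniq S -> (forall t, ZpP alpha beta kappa c t <-> t \in S) ->
    has_card (ZsP alpha beta kappa c)
      (count (fun t => ((hP alpha beta kappa c)^`().[t] < 0)%R) S).
  move=> kappa c S uS HS; exists (filter (fun t => ((hP alpha beta kappa c)^`().[t] < 0)%R) S).
  split; [by rewrite filter_uniq| |by rewrite size_filter].
  move=> t; rewrite mem_filter; split.
    by move=> [/HS tS ->].
  by move=> /andP [tn /HS tS]; split.
have [k1 [c1 [kp1 [S1 [uS1 HS1 sS1 nd1]]]]] : exists (k1 : 'cV[R]_m.+1) (c1 : 'cV[R]_s), pos_vec k1 /\ exists S1 : seq R, [/\ uniq S1,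
    (forall t, ZpP alpha beta k1 c1 t <-> t \in S1), size S1 = Npos &
    forall t, t \in S1 -> (hP alpha beta k1 c1)^`().[t] != 0].
  have [S [uS HS sS]] := (card_pos Hdim Hlab kap0 c0 Npos).1 HN0.
  case: (posnP Npos) => [N0|Npos_gt0].
    exists kap0, c0; split => //; exists S; split => //.
    by move: sS; rewrite N0 => /size0nil ->.
  have e0p : 0 < kap0 ord0 0 := kp0 ord0.
  have [y [ye [L [uL sL HL]] nd]] := perturb (@Ipos_conv R s m alpha beta c0)
     (fun t It => Ipos_open It) (fun t It => pp_pos It) uS HS
     (ltac:(by rewrite sS)) e0p.
  pose k1 := kap0 + y *: delta_mx ord0 ord0.
  have kp1 : pos_vec k1.
    move=> i; rewrite /k1 !mxE; case: (eqVneq i ord0) => [->|ni] /=.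
      rewrite mulr1; move: ye; rewrite ltr_norml => /andP [h1 _]; lra.
    by rewrite mulr0 addr0; apply: kp0.
  have [S1 [uS1 HS1 sS1]] := finZ k1 c0 kp1.
  have LS1 : {subset L <= S1}.
    move=> t tL; apply/HS1; have [It Ht] := HL t tL; split => //.
    by rewrite /k1 (hP_shift Hlab).
  have := uniq_leq_size uL LS1 => LS.
  exists k1, c0; split => //; exists S1; split => //.
    apply/eqP; rewrite eqn_leq sS1 /=; rewrite -sS; exact: leq_trans sL LS.
  move=> t /HS1 [It Ht]; move: Ht; rewrite /k1 (hP_shift Hlab) => Ht.
  exact: nd.
set s1 := count (fun t => ((hP alpha beta k1 c1)^`().[t] < 0)%R) S1.
have [_ B1] := count_stable (@Ipos_conv R s m alpha beta c1) uS1 HS1.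
have B1' := B1 nd1; rewrite sS1 -/s1 in B1'.
pose Pst := fun k : nat => admits (R:=R) (stab_pos_ss_in (R:=R) alpha beta) k.
have bnd : forall k, Pst k -> (k <= Npos)%N.
  move=> k [kap [c [kp Hk]]].
  have Hz := (card_stab Hdim Hlab kap c k).1 Hk.
  have [S [uS HS sS]] := finZ kap c kp.
  rewrite (hc_unique Hz (stabcard kap c S uS HS)).
  exact: leq_trans (count_size _ _) sS.
have ex1 : Pst s1.
  exists k1, c1; split => //; apply/(card_stab Hdim Hlab); exact: stabcard.
have [K [PK maxK]] := @max_exists Pst Npos (ex_intro _ s1 ex1) bnd.
have capst : cap_stab_is R alpha beta K.
  split; last by split.
  move=> [kap [c [kp Hn]]]; apply: Hn.
  have [S [uS HS sS]] := finZ kap c kp.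
  exists (count (fun t => ((hP alpha beta kap c)^`().[t] < 0)%R) S).
  apply/(card_stab Hdim Hlab); exact: stabcard.
case: (eqVneq s1 K) => [Es|Ns].
  exists k1, c1, K; split => //.
    by apply/(card_pos Hdim Hlab); exists S1.
  by rewrite -Es; apply/(card_stab Hdim Hlab); exact: stabcard.
have s1K : (s1 < K)%N by rewrite ltn_neqAle Ns maxK.
move: PK => [kA [cA [kpA HA]]].
have [SA [uSA HSA sSA]] := finZ kA cA kpA.
have HAZ := (card_stab Hdim Hlab kA cA K).1 HA.
have EK := hc_unique HAZ (stabcard kA cA SA uSA HSA).
have [A1 _] := count_stable (@Ipos_conv R s m alpha beta cA) uSA HSA.
rewrite -EK in A1.
have szA : size SA = Npos.
  have h0 : ((s1.+1).*2 <= K.*2)%N by rewrite leq_double.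
  have h1 := leq_trans h0 A1.
  rewrite doubleS ltnS in h1.
  apply/eqP; rewrite eqn_leq sSA /=; exact: leq_trans B1' h1.
exists kA, cA, K; split => //.
by apply/(card_pos Hdim Hlab); exists SA.
Qed.
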